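(* Let $(X,p)$ and $(Y,d)$ be complete separable metric spaces and let $F: X \Rightarrow Y$ be a multi-valued function whose graph is an analytic subset of $X \times Y$. Then the set of points of strong continuity of $F$ is a co-analytic subset of $X$.
   Context: A multi-valued function $F: X \Rightarrow Y$ assigns to each $x$ a nonempty set $F(x)\subseteq Y$; its graph is $\{(x,y): y\in F(x)\}$. $F$ is strongly continuous at $x$ if for every $y \in F(x)$ and every $\varepsilon>0$ there is $\delta>0$ such that for every $x' \in B_p(x,\delta)$ there is $y' \in F(x')$ with $d(y,y')<\varepsilon$. A subset of a complete separable metric space is analytic if it is a continuous image of a closed subset of a complete separable metric space, and co-analytic if its complement is analytic. *)

(* Defs.v *)
From Stdlib Require Import Reals.
Open Scope R_scope.

Definition is_metric {T : Type} (d : T -> T -> R) : Prop :=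
  (forall x y, 0 <= d x y) /\
  (forall x y, d x y = 0 <-> x = y) /\
  (forall x y, d x y = d y x) /\
  (forall x y z, d x z <= d x y + d y z).

Definition cauchy_seq {T : Type} (d : T -> T -> R) (u : nat -> T) : Prop :=
  forall eps, 0 < eps -> exists N, forall m n, (N <= m)%nat -> (N <= n)%nat ->
    d (u m) (u n) < eps.

Definition seq_converges_to {T : Type} (d : T -> T -> R) (u : nat -> T) (l : T) : Prop :=
  forall eps, 0 < eps -> exists N, forall n, (N <= n)%nat -> d (u n) l < eps.

Definition complete_metric {T : Type} (d : T -> T -> R) : Prop :=
  forall u : nat -> T, cauchy_seq d u -> exists l, seq_converges_to d u l.

(* separable: there is a countable dense subset (the option type allows
   the empty space). *)
Definition separable_metric {T : Type} (d : T -> T -> R) : Prop :=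
  exists s : nat -> option T, forall x eps, 0 < eps ->
    exists n y, s n = Some y /\ d x y < eps.

Definition polish_metric {T : Type} (d : T -> T -> R) : Prop :=
  is_metric d /\ complete_metric d /\ separable_metric d.

Definition closed_set {T : Type} (d : T -> T -> R) (C : T -> Prop) : Prop :=
  forall x, (forall eps, 0 < eps -> exists y, C y /\ d x y < eps) -> C x.

Definition continuous_on {W Z : Type} (dW : W -> W -> R) (dZ : Z -> Z -> R)
  (C : W -> Prop) (f : W -> Z) : Prop :=
  forall w, C w -> forall eps, 0 < eps -> exists delta, 0 < delta /\
    forall w', C w' -> dW w w' < delta -> dZ (f w) (f w') < eps.

Definition analytic {Z : Type} (dZ : Z -> Z -> R) (A : Z -> Prop) : Prop :=
  exists (W : Type) (dW : W -> W -> R) (C : W -> Prop) (f : W -> Z),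
    polish_metric dW /\ closed_set dW C /\ continuous_on dW dZ C f /\
    (forall z, A z <-> exists w, C w /\ f w = z).

Definition coanalytic {Z : Type} (dZ : Z -> Z -> R) (A : Z -> Prop) : Prop :=
  analytic dZ (fun z => ~ A z).

Definition prod_dist {X Y : Type} (dX : X -> X -> R) (dY : Y -> Y -> R)
  (a b : X * Y) : R := Rmax (dX (fst a) (fst b)) (dY (snd a) (snd b)).

(* A multi-valued function F : X => Y is a relation F x y meaning y \in F(x);
   its graph is {(x,y) | F x y}. *)
Definition graph {X Y : Type} (F : X -> Y -> Prop) : X * Y -> Prop :=
  fun z => F (fst z) (snd z).

Definition strongly_continuous_at {X Y : Type} (p : X -> X -> R) (d : Y -> Y -> R)
  (F : X -> Y -> Prop) (x : X) : Prop :=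
  forall y, F x y -> forall eps, 0 < eps -> exists delta, 0 < delta /\
    forall x', p x x' < delta -> exists y', F x' y' /\ d y y' < eps.

(* Main.v *)
Require Import Defs.
From Stdlib Require Import Reals Lra Classical Cantor Arith Lia ZArith.
Open Scope R_scope.

Definition disc (a b : nat) : R := if Nat.eqb a b then 0 else 1.

Definition dprod {W : Type} (dW : W -> W -> R) (a b : nat * W) : R :=
  Rmax (disc (fst a) (fst b)) (dW (snd a) (snd b)).

Lemma disc_ge0 a b : 0 <= disc a b.
Proof. unfold disc; destruct (Nat.eqb a b); lra. Qed.

Lemma disc_lt1 a b : disc a b < 1 -> a = b.
Proof. unfold disc; destruct (Nat.eqb a b) eqn:E; intros H.
  now apply Nat.eqb_eq. lra. Qed.

Lemma disc_refl a : disc a a = 0.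
Proof. unfold disc; now rewrite Nat.eqb_refl. Qed.

Lemma disc_tri a b c : disc a c <= disc a b + disc b c.
Proof.
  unfold disc. destruct (Nat.eqb a c) eqn:E1; destruct (Nat.eqb a b) eqn:E2;
  destruct (Nat.eqb b c) eqn:E3; try lra.
  apply Nat.eqb_eq in E2; apply Nat.eqb_eq in E3; subst.
  rewrite Nat.eqb_refl in E1; discriminate.
Qed.

Lemma dprod_polish {W : Type} (dW : W -> W -> R) :
  polish_metric dW -> polish_metric (dprod dW).
Proof.
  intros [[H0 [H1 [H2 H3]]] [Hc [s Hs]]].
  split; [|split].
  - split; [|split; [|split]].
    + intros x y; unfold dprod. pose proof (H0 (snd x) (snd y)).
      pose proof (Rmax_r (disc (fst x) (fst y)) (dW (snd x) (snd y))). lra.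
    + intros [a x] [b y]; unfold dprod; simpl; split.
      * intros E. pose proof (Rmax_l (disc a b) (dW x y)).
        pose proof (Rmax_r (disc a b) (dW x y)).
        pose proof (disc_ge0 a b). pose proof (H0 x y).
        assert (a = b) by (apply disc_lt1; lra).
        assert (x = y) by (apply H1; lra). subst; auto.
      * intros E; injection E; intros; subst. rewrite disc_refl.
        rewrite (proj2 (H1 y y) eq_refl). apply Rmax_left; lra.
    + intros [a x] [b y]; unfold dprod, disc; simpl.
      rewrite Nat.eqb_sym, H2. reflexivity.
    + intros [a x] [b y] [c z]; unfold dprod; simpl.
      apply Rmax_lub.
      * pose proof (disc_tri a b c).
        pose proof (Rmax_l (disc a b) (dW x y)).
        pose proof (Rmax_l (disc b c) (dW y z)). lra.
      * pose proof (H3 x y z).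
        pose proof (Rmax_r (disc a b) (dW x y)).
        pose proof (Rmax_r (disc b c) (dW y z)). lra.
  - intros u Hu.
    destruct (Hu 1 ltac:(lra)) as [N HN].
    assert (Hf : forall n, (N <= n)%nat -> fst (u n) = fst (u N)).
    { intros n Hn. specialize (HN n N Hn (le_n N)). unfold dprod in HN.
      apply disc_lt1. pose proof (Rmax_l (disc (fst (u n)) (fst (u N))) (dW (snd (u n)) (snd (u N)))). lra. }
    destruct (Hc (fun n => snd (u n))) as [l Hl].
    { intros eps He. destruct (Hu eps He) as [M HM]. exists M. intros m n Hm Hn.
      specialize (HM m n Hm Hn). unfold dprod in HM.
      pose proof (Rmax_r (disc (fst (u m)) (fst (u n))) (dW (snd (u m)) (snd (u n)))). lra. }
    exists (fst (u N), l). intros eps He. destruct (Hl eps He) as [M HM].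
    exists (max N M). intros n Hn. unfold dprod; simpl.
    rewrite (Hf n ltac:(lia)), disc_refl. apply Rmax_lub_lt. lra.
    apply HM; lia.
  - exists (fun m => let (i, j) := Cantor.of_nat m in
                     match s j with Some w => Some (i, w) | None => None end).
    intros [i x] eps He. destruct (Hs x eps He) as [j [y [Hj Hy]]].
    exists (Cantor.to_nat (i, j)), (i, y). rewrite Cantor.cancel_of_to, Hj.
    split; auto. unfold dprod; simpl. rewrite disc_refl. apply Rmax_lub_lt; lra.
Qed.

Definition rk (k : nat) : R := / (INR k + 1).

Lemma rk_pos k : 0 < rk k.
Proof. unfold rk. apply Rinv_0_lt_compat. pose proof (pos_INR k). lra. Qed.

Lemma rk_small eps : 0 < eps -> exists k, rk k < eps.
Proof.
  intros He. destruct (archimed (/ eps)) as [H1 _].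
  pose proof (Rinv_0_lt_compat _ He).
  assert (0 <= IZR (up (/ eps))) by lra.
  exists (Z.to_nat (up (/ eps))). unfold rk.
  rewrite INR_IZR_INZ, Z2Nat.id by (apply le_0_IZR; lra).
  rewrite <- (Rinv_inv eps) at 2. apply Rinv_lt_contravar.
  apply Rmult_lt_0_compat; lra. lra.
Qed.

Definition clos {X : Type} (p : X -> X -> R) (B : X -> Prop) (x : X) : Prop :=
  forall delta, 0 < delta -> exists x', B x' /\ p x x' < delta.

Theorem proposition3p4 (X Y : Type) (p : X -> X -> R) (d : Y -> Y -> R)
  (F : X -> Y -> Prop) :
  polish_metric p -> polish_metric d ->
  (forall x, exists y, F x y) ->
  analytic (prod_dist p d) (graph F) ->
  coanalytic p (fun x => strongly_continuous_at p d F x).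
Proof.
  intros Hp Hd _ [W [dW [C [f [HW [HC [Hf Himg]]]]]]].
  destruct Hp as [[p0 [p1 [p2 p3]]] _].
  destruct Hd as [[d0 [d1 [d2 d3]]] [_ [sY HsY]]].
  pose (C' := fun (a : nat * W) =>
    let (n, k) := Cantor.of_nat (fst a) in
    C (snd a) /\ exists c, sY n = Some c /\ d c (snd (f (snd a))) <= rk k /\
      clos p (fun x' => forall y', F x' y' -> 2 * rk k <= d c y') (fst (f (snd a)))).
  exists (nat * W)%type, (dprod dW), C', (fun a => fst (f (snd a))).
  split; [apply dprod_polish; auto|].
  assert (Hpd : forall a b : X * Y, p (fst a) (fst b) <= prod_dist p d a b /\
                                    d (snd a) (snd b) <= prod_dist p d a b).
  { intros a b; unfold prod_dist; split; [apply Rmax_l|apply Rmax_r]. }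
  assert (Hdp : forall a b : nat * W, dW (snd a) (snd b) <= dprod dW a b).
  { intros a b; unfold dprod; apply Rmax_r. }
  split; [|split].
  -
    intros [m w] Hcl.
    assert (Hsl : forall eps, 0 < eps -> exists w', C' (m, w') /\ dW w w' < eps).
    { intros eps He. destruct (Hcl (Rmin eps 1)) as [[m' w'] [HC' Hd']].
      { apply Rmin_glb_lt; lra. }
      pose proof (Rmin_l eps 1). pose proof (Rmin_r eps 1).
      unfold dprod in Hd'; simpl in Hd'.
      pose proof (Rmax_l (disc m m') (dW w w')). pose proof (Rmax_r (disc m m') (dW w w')).
      assert (m = m') by (apply disc_lt1; lra). subst m'.
      exists w'; split; auto; lra. }
    unfold C'; simpl. destruct (Cantor.of_nat m) as [n k] eqn:Enk.
    assert (HCw : C w).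
    { apply HC. intros eps He. destruct (Hsl eps He) as [w' [H1 H2]].
      exists w'. unfold C' in H1; simpl in H1; rewrite Enk in H1. split; [apply H1|auto]. }
    split; auto.
    destruct (Hsl 1 ltac:(lra)) as [w1 [H1 _]]. unfold C' in H1; simpl in H1; rewrite Enk in H1.
    destruct H1 as [_ [c [Hc _]]].
    assert (Hsl2 : forall eps, 0 < eps -> exists w', C w' /\ dW w w' < eps /\
        d c (snd (f w')) <= rk k /\
        clos p (fun x' => forall y', F x' y' -> 2 * rk k <= d c y') (fst (f w'))).
    { intros eps He. destruct (Hsl eps He) as [w' [H1 H2]].
      unfold C' in H1; simpl in H1; rewrite Enk in H1.
      destruct H1 as [H1 [c' [Hc' [H3 H4]]]]. rewrite Hc in Hc'. injection Hc'; intros; subst c'.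
      exists w'; auto. }
    exists c; split; auto; split.
    + destruct (Rle_or_lt (d c (snd (f w))) (rk k)) as [|Hgt]; auto.
      exfalso. set (g := d c (snd (f w)) - rk k).
      destruct (Hf w HCw g ltac:(unfold g; lra)) as [de [Hde Hde']].
      destruct (Hsl2 de Hde) as [w' [H1 [H2 [H3 _]]]].
      specialize (Hde' w' H1 H2). destruct (Hpd (f w) (f w')) as [_ H5].
      pose proof (d3 c (snd (f w')) (snd (f w))). rewrite (d2 (snd (f w')) (snd (f w))) in H.
      unfold g in *. lra.
    + intros de Hde.
      destruct (Hf w HCw (de/2) ltac:(lra)) as [de1 [Hde1 Hde1']].
      destruct (Hsl2 de1 Hde1) as [w' [H1 [H2 [_ H4]]]].
      specialize (Hde1' w' H1 H2). destruct (Hpd (f w) (f w')) as [H5 _].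
      destruct (H4 (de/2) ltac:(lra)) as [x' [Hx' Hx'']].
      exists x'; split; auto.
      pose proof (p3 (fst (f w)) (fst (f w')) x'). lra.
  -
    intros [m w] HCm eps He. unfold C' in HCm; simpl in HCm.
    destruct (Cantor.of_nat m) as [n k]. destruct HCm as [HCw _].
    destruct (Hf w HCw eps He) as [de [Hde Hde']].
    exists de; split; auto. intros [m' w'] HC' Hdd.
    unfold C' in HC'; simpl in HC'. destruct (Cantor.of_nat m') as [n' k'].
    destruct HC' as [HCw' _]. simpl.
    specialize (Hdp (m, w) (m', w')). simpl in Hdp.
    specialize (Hde' w' HCw' ltac:(lra)). destruct (Hpd (f w) (f w')). lra.
  - intros x; split.
    + intros Hns. unfold strongly_continuous_at in Hns.
      apply not_all_ex_not in Hns as [y Hns].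
      apply imply_to_and in Hns as [Hxy Hns].
      apply not_all_ex_not in Hns as [eps Hns].
      apply imply_to_and in Hns as [He Hns].
      destruct (rk_small (eps/3) ltac:(lra)) as [k Hk].
      pose proof (rk_pos k).
      destruct (HsY y (rk k) H) as [n [c [Hc Hyc]]].
      destruct (proj1 (Himg (x, y)) Hxy) as [w [HCw Hfw]].
      exists (Cantor.to_nat (n, k), w). unfold C'. cbv beta. unfold fst at 1 2. unfold snd at 1 2 3 4.
      rewrite Cantor.cancel_of_to, Hfw; simpl. split; [split; auto|auto].
      exists c; split; auto; split.
      * rewrite d2; lra.
      * intros de Hde. apply NNPP; intros Hno. apply Hns. exists de; split; auto.
        intros x' Hx'. apply NNPP; intros Hno2. apply Hno. exists x'; split; auto.
        { intros y' Hy'. assert (eps <= d y y').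
          { apply Rnot_lt_le; intros Hlt; apply Hno2; exists y'; auto. }
          pose proof (d3 y c y'). lra. }
      * rewrite Hfw; reflexivity.
    + intros [[m w] [HCm Hx]] Hsc. simpl in Hx. unfold C' in HCm; simpl in HCm.
      destruct (Cantor.of_nat m) as [n k]. destruct HCm as [HCw [c [Hc [H1 H2]]]].
      pose proof (rk_pos k).
      assert (Hg : graph F (f w)) by (apply Himg; eauto).
      unfold graph in Hg. rewrite Hx in Hg, H2.
      destruct (Hsc _ Hg (rk k) H) as [de [Hde Hde']].
      destruct (H2 de Hde) as [x' [HB Hpx]].
      destruct (Hde' x' Hpx) as [y' [Hy' Hdy]].
      specialize (HB y' Hy'). pose proof (d3 c (snd (f w)) y'). lra.
Qed.
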